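(* Let $\Sigma$ be an alphabet, $n\ge1$, and let $p(x)\in\mathrm{GF}(2)[x]$ be an irreducible polynomial of degree $L\ge n$. Let $h_1:\Sigma\to\mathrm{GF}(2)[x]/p(x)$ be a random function whose values $h_1(c)$, $c\in\Sigma$, are mutually independent and uniformly distributed on the field $\mathrm{GF}(2)[x]/p(x)$ (which has $2^L$ elements). Define $h(a_1,\dots,a_n)=h_1(a_1)x^{n-1}+h_1(a_2)x^{n-2}+\cdots+h_1(a_n)$ computed in $\mathrm{GF}(2)[x]/p(x)$. Then $h$ is pairwise independent: for all distinct $a,a'\in\Sigma^n$ and all $y,y'\in\mathrm{GF}(2)[x]/p(x)$, $P(h(a)=y\wedge h(a')=y')=4^{-L}$.
   Context: This hash family is called General. Elements of $\mathrm{GF}(2)[x]/p(x)$ are identified with polynomials of degree at most $L-1$ over $\mathrm{GF}(2)$, equivalently with $L$-bit integers. *)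

(* Defs.v *)
From HB Require Import structures.
From mathcomp Require Import all_boot all_order all_algebra all_field.
Set Implicit Arguments. Unset Strict Implicit. Unset Printing Implicit Defensive.
Import GRing.Theory.
Local Open Scope ring_scope.

Definition general_hash (Sigma : finType) (p : {poly 'F_2}) (n : nat)
  (h1 : {ffun Sigma -> {poly %/ p}}) (a : n.-tuple Sigma) : {poly %/ p} :=
  \sum_(i < n) h1 (tnth a i) * 'qX ^+ (n.-1 - i).

Definition prob_h1 (Sigma : finType) (p : {poly 'F_2})
  (E : pred {ffun Sigma -> {poly %/ p}}) : rat :=
  (#|[set h1 | E h1]|)%:R / (#|{ffun Sigma -> {poly %/ p}}|)%:R.

(* Main.v *)
Require Import Defs.
From HB Require Import structures.
From mathcomp Require Import all_boot all_order all_algebra all_field.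
Import GRing.Theory.
Local Open Scope ring_scope.
Set Implicit Arguments. Unset Strict Implicit. Unset Printing Implicit Defensive.

Lemma fiber_card (G H : finType) (f : G -> H) :
  (forall z z', exists g : G -> G, injective g /\ forall x, f x = z -> f (g x) = z') ->
  forall z, (#|[set x | f x == z]| * #|H|)%N = #|G|.
Proof.
move=> Htr.
have le : forall z z', (#|[set x | f x == z]| <= #|[set x | f x == z']|)%N.
  move=> z z'; have [g [ig Hg]] := Htr z z'.
  rewrite -(card_imset _ ig); apply: subset_leq_card.
  apply/subsetP => w /imsetP [x]; rewrite inE => /eqP Hx ->.
  by rewrite inE (Hg _ Hx).
move=> z.
have eqc : forall z', #|[set x | f x == z']| = #|[set x | f x == z]|.
  by move=> z'; apply/eqP; rewrite eqn_leq !le.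
have -> : #|G| = (\sum_(x : G) 1)%N by rewrite sum1_card.
rewrite (partition_big f predT) //=.
transitivity (\sum_(j : H) #|[set x | f x == z]|)%N.
  by rewrite sum_nat_const cardT -cardE mulnC.
apply: eq_bigr => j _; rewrite -(eqc j) -sum1_card.
by apply: eq_bigl => x; rewrite inE.
Qed.

Lemma sum_delta (F : comNzRingType) (Sigma : finType) (w : Sigma -> F) c :
  \sum_e (e == c)%:R * w e = w c.
Proof.
rewrite (bigD1 c) //= eqxx mul1r big1 ?addr0 // => e /negbTE ->.
by rewrite mul0r.
Qed.

Lemma alg2 (F : comNzRingType) (y y' uc ud vc vd : F) :
  (y * vd - y' * ud) * uc + (y' * uc - y * vc) * ud = y * (uc * vd - ud * vc).
Proof.
rewrite !mulrBl !mulrBr (mulrAC y' ud uc) addrA subrK.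
by rewrite -!mulrA (mulrC vd uc) (mulrC vc ud).
Qed.

Lemma alg3 (F : comNzRingType) (y y' uc ud vc vd : F) :
  (y * vd - y' * ud) * vc + (y' * uc - y * vc) * vd = y' * (uc * vd - ud * vc).
Proof.
rewrite !mulrBl !mulrBr (mulrAC y vd vc) addrC addrA subrK.
by rewrite -!mulrA addrC.
Qed.

Lemma solve2 (F : fieldType) (Sigma : finType) (u v : Sigma -> F) c d :
  u c * v d - u d * v c != 0 -> forall y y',
  exists h1 : {ffun Sigma -> F},
    (\sum_e h1 e * u e = y) /\ (\sum_e h1 e * v e = y').
Proof.
move=> D0 y y'.
set D := u c * v d - u d * v c.
exists [ffun e => (e == c)%:R * ((y * v d - y' * u d) / D)
                  + (e == d)%:R * ((y' * u c - y * v c) / D)].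
have key : forall w : Sigma -> F, \sum_e [ffun e => (e == c)%:R * ((y * v d - y' * u d) / D)
                  + (e == d)%:R * ((y' * u c - y * v c) / D)] e * w e =
   ((y * v d - y' * u d) * w c + (y' * u c - y * v c) * w d) / D.
  move=> w; under eq_bigr => e _ do rewrite ffunE mulrDl -!mulrA.
  rewrite big_split /= !sum_delta.
  by rewrite !mulrA !(mulrAC _ D^-1) -mulrDl.
rewrite !key; split.
  by rewrite alg2 -/D mulfK.
by rewrite alg3 -/D mulfK.
Qed.

Lemma minor_exists (F : fieldType) (Sigma : finType) (u v : Sigma -> F) c :
  \sum_e u e = \sum_e v e -> \sum_e u e != 0 -> u c != v c ->
  exists d, u c * v d - u d * v c != 0.
Proof.
move=> Es S0 ucv.
apply/existsP; apply: contraT; rewrite negb_exists => /forallP H.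
have : \sum_d (u c * v d - u d * v c) = 0.
  by apply: big1 => d _; move: (H d); rewrite negbK => /eqP.
rewrite sumrB -mulr_sumr -mulr_suml -Es (mulrC (\sum_e u e)) -mulrBl => /eqP.
rewrite mulf_eq0 subr_eq0 (negbTE S0) orbF.
by rewrite (negbTE ucv).
Qed.

Definition Pe n (e : 'I_n -> 'F_2) : {poly 'F_2} := \sum_(i < n) e i *: 'X^(n.-1 - i).

Lemma coef_Pe_big n (e : 'I_n -> 'F_2) k : (n <= k)%N -> (Pe e)`_k = 0.
Proof.
move=> nk; rewrite coef_sum big1 // => i _; rewrite coefZ coefXn.
suff -> : (k == n.-1 - i)%N = false by rewrite mulr0.
apply/negbTE; rewrite neq_ltn; apply/orP; right.
apply: (leq_trans _ nk); apply: (leq_ltn_trans (leq_subr _ _)).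
by rewrite prednK // (leq_ltn_trans _ (ltn_ord i)).
Qed.

Lemma size_Pe n (e : 'I_n -> 'F_2) : (size (Pe e) <= n)%N.
Proof. by apply/leq_sizeP => k; apply: coef_Pe_big. Qed.

Lemma coef_Pe n (e : 'I_n -> 'F_2) (j : 'I_n) : (Pe e)`_(n.-1 - j) = e j.
Proof.
rewrite coef_sum (bigD1 j) //= coefZ coefXn eqxx mulr1 big1 ?addr0 // => i ij.
rewrite coefZ coefXn eqn_sub2lE; last 2 first.
- by rewrite -ltnS prednK // (leq_ltn_trans _ (ltn_ord i)).
- by rewrite -ltnS prednK // (leq_ltn_trans _ (ltn_ord i)).
have ij' : (i : nat) != j := ij.
by rewrite eq_sym (negbTE ij') mulr0.
Qed.

Section Conc.
Variables (Sigma : finType) (p : {poly 'F_2}) (n : nat).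

Definition ua (a : n.-tuple Sigma) (c : Sigma) : {poly %/ p} :=
  in_qpoly p (Pe (fun i => (tnth a i == c)%:R)).

Lemma in_qpoly_Pe (e : 'I_n -> 'F_2) :
  in_qpoly p (Pe e) = \sum_(i < n) e i *: 'qX ^+ (n.-1 - i).
Proof.
rewrite /Pe linear_sum; apply: eq_bigr => i _.
by rewrite linearZ /= rmorphXn.
Qed.

Lemma hash_eq (h1 : {ffun Sigma -> {poly %/ p}}) a :
  general_hash h1 a = \sum_c h1 c * ua a c.
Proof.
rewrite /general_hash.
under [RHS]eq_bigr => c _ do rewrite /ua in_qpoly_Pe mulr_sumr.
rewrite exchange_big /=; apply: eq_bigr => i _.
rewrite (bigD1 (tnth a i)) //= eqxx big1 ?addr0.
  by rewrite -scalerAr scale1r.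
move=> c /negbTE; rewrite eq_sym => ->.
by rewrite -scalerAr scale0r.
Qed.

Lemma sum_ua a : \sum_c ua a c = in_qpoly p (Pe (fun _ : 'I_n => 1)).
Proof.
rewrite /ua -linear_sum /Pe; congr (in_qpoly p _).
rewrite exchange_big; apply: eq_bigr => i _ /=; rewrite -scaler_suml.
congr (_ *: _); rewrite (bigD1 (tnth a i)) //= eqxx big1 ?addr0 //.
by move=> c; rewrite eq_sym => /negbTE ->.
Qed.

Lemma Pe0 : Pe (fun _ : 'I_n => 0) = 0.
Proof. by rewrite /Pe big1 // => i _; rewrite scale0r. Qed.

Lemma Pe_inj (hI : monic_irreducible_poly p) L :
  size p = L.+1 -> (n <= L)%N -> forall e e' : 'I_n -> 'F_2,
  in_qpoly p (Pe e) = in_qpoly p (Pe e') -> e =1 e'.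
Proof.
move=> sp nL e e' E0.
have E1 := congr1 (@polyn _ _) E0.
have sm : forall f : 'I_n -> 'F_2, (size (Pe f) < size (mk_monic p))%N.
  by move=> f; rewrite (mk_monicE hI) sp ltnS (leq_trans (size_Pe f) nL).
rewrite !in_qpoly_small // in E1; move=> j.
by rewrite -!coef_Pe E1.
Qed.
End Conc.

Lemma F2_neq0 (x : 'F_2) : x != 0 -> x = 1.
Proof. case: x => [[|[|k]] Hk] //= _; exact: val_inj. Qed.

Unset Implicit Arguments. Set Strict Implicit.
Import Num.Theory.

Theorem mainTheorem4 (Sigma : finType) (n L : nat) (p : {poly 'F_2}) :
  (1 <= n)%N -> irreducible_poly p -> size p = L.+1 -> (n <= L)%N ->
  forall (a a' : n.-tuple Sigma) (y y' : {poly %/ p}),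
    a != a' ->
    prob_h1 (fun h1 => (general_hash h1 a == y) && (general_hash h1 a' == y'))
    = (4 ^ L)%:R^-1.
Proof.
move=> n1 irr sp nL a a' y y' aa'.
have p0 : p != 0 by rewrite -size_poly_gt0 sp.
have mon : p \is monic.
  rewrite monicE; apply/eqP; apply: F2_neq0; by rewrite lead_coef_eq0.
have hI : monic_irreducible_poly p := (irr, mon).
pose F1 := {poly %/ p with hI}.
pose u := ua p a; pose v := ua p a'.
pose f := fun h1 : {ffun Sigma -> {poly %/ p}} =>
  (\sum_c h1 c * u c, \sum_c h1 c * v c).
have surj : forall z, exists h1, f h1 = z.
  have [j aj] : exists j, tnth a j != tnth a' j.
    apply/existsP; apply: contraT; rewrite negb_exists => /forallP H.
    rewrite -(negbTE aa'); apply/eqP/eq_from_tnth => i; apply/eqP.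
    by move: (H i); rewrite negbK.
  have uv : u (tnth a j) != v (tnth a j).
    apply/negP => /eqP E; have := Pe_inj hI sp nL E j.
    by rewrite eqxx eq_sym (negbTE aj) => /eqP.
  have S0 : \sum_c u c != 0.
    rewrite /u sum_ua; apply/negP => /eqP E.
    rewrite -(in_qpoly0 p) -(Pe0 n) in E.
    by have := Pe_inj hI sp nL E (Ordinal n1) => /eqP.
  have Suv : \sum_c u c = \sum_c v c by rewrite /u /v !sum_ua.
  have [d Dd] := minor_exists (F:=F1) Suv S0 uv.
  move=> [z1 z2]; have [h1 [H1 H2]] := solve2 Dd z1 z2.
  by exists h1; rewrite /f H1 H2.
have fadd : forall x w, f (x + w) = f x + f w.
  move=> x w.
  have L1 : forall g : Sigma -> {poly %/ p},
      \sum_c (x + w) c * g c = \sum_c x c * g c + \sum_c w c * g c.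
    by move=> g; rewrite -big_split; apply: eq_bigr => c _; rewrite ffunE mulrDl.
  by rewrite /f !L1.
have card := @fiber_card _ _ f _ (y, y').
rewrite /prob_h1.
have -> : [set h1 | (general_hash h1 a == y) && (general_hash h1 a' == y')]
        = [set h1 | f h1 == (y, y')].
  by apply/setP => h1; rewrite !inE !hash_eq xpair_eqE.
have cF : #|{poly %/ p}| = (2 ^ L)%N.
  by rewrite -[LHS]/(#|F1|) (card_qfpoly hI) card_Fp // sp.
rewrite -card; last first.
  move=> z z'; have [d0 Hd] := surj (z' - z).
  exists (fun x => x + d0); split; first exact: addIr.
  by move=> x Hx; rewrite fadd Hx Hd addrC subrK.
rewrite card_prod cF -expnMn natrM invfM mulrA divff ?mul1r //.
have [h0 Hh0] := surj (y, y').
rewrite pnatr_eq0 -lt0n; apply/card_gt0P; exists h0; by rewrite inE Hh0.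
Qed.
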